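(* Let $p\geq 2$ be an integer, $n=2^p-1$, and let $s$ be an integer with $s\geq 3\cdot 2^{p-2}$. Then there exists a perfect code in the graph $\Gamma_n(1^s)$.
   Context: The $n$-cube $Q_n$ is the graph whose vertex set is the set $\mathbb{B}_n$ of binary strings of length $n$, two strings being adjacent if they differ in exactly one position. For an integer $s\ge 1$, $\Gamma_n(1^s)$ is the subgraph of $Q_n$ induced by the binary strings of length $n$ that do not contain $1^s$ (the string of $s$ consecutive 1's) as a substring, where $\bm{f}$ is a substring of $\bm{s}$ if $\bm{s}=\bm{x}\bm{f}\bm{y}$ for some (possibly empty) strings $\bm{x},\bm{y}$. A perfect code in a graph $G$ is a set $C$ of vertices such that every vertex of $G$ lies in the closed neighbourhood $N[c]=\{v: d_G(c,v)\le 1\}$ of exactly one vertex $c\in C$ (equivalently, $C$ is a dominating set of $G$ and any two distinct elements of $C$ are at distance at least $3$ in $G$). *)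

(* Defs.v *)
From mathcomp Require Import all_boot.
Set Implicit Arguments. Unset Strict Implicit. Unset Printing Implicit Defensive.

Definition bstring (n : nat) := (n.-tuple bool).

Definition hamming (n : nat) (x y : bstring n) : nat :=
  count id [seq a.1 != a.2 | a <- zip (val x) (val y)].

Definition cube_adj (n : nat) (x y : bstring n) : bool := hamming x y == 1.

Definition substring (f w : seq bool) : bool := infix f w.

Definition gamma_vert (n s : nat) : pred (bstring n) :=
  fun x => ~~ substring (nseq s true) (val x).

Definition gamma_adj (n s : nat) (x y : bstring n) : bool :=
  [&& gamma_vert s x, gamma_vert s y & cube_adj x y].

Definition gamma_closed_nbhd (n s : nat) (c : bstring n) : pred (bstring n) :=
  fun v => gamma_vert s v && ((v == c) || gamma_adj s c v).

Definition perfect_code_gamma (n s : nat) (C : {set bstring n}) : Prop :=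
  (forall c, c \in C -> gamma_vert s c) /\
  (forall v, gamma_vert s v ->
     #|[set c in C | gamma_closed_nbhd s c v]| = 1).

(* Main.v *)
From Stdlib Require Import PeanoNat Lia.
From HB Require Import structures.
Require Import Defs.
From mathcomp Require Import all_boot zify.
Set Implicit Arguments. Unset Strict Implicit. Unset Printing Implicit Defensive.

HB.instance Definition _ := Monoid.isComLaw.Build nat 0 Nat.lxor (fun a b c => esym (Nat.lxor_assoc a b c)) Nat.lxor_comm Nat.lxor_0_l.

Section S.
Variable n : nat.

Lemma hammingE (x y : bstring n) :
  hamming x y = #|[pred i | tnth x i != tnth y i]|.
Proof.
rewrite /hamming.
have -> : val x = [seq tnth x i | i <- enum 'I_n] by rewrite map_tnth_enum.
have -> : val y = [seq tnth y i | i <- enum 'I_n] by rewrite map_tnth_enum.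
rewrite zip_map -map_comp count_map.
rewrite cardE /enum_mem size_filter.
by rewrite count_filter; apply: eq_count => i /=; rewrite andbT.
Qed.

Definition flip (x : bstring n) (j : 'I_n) : bstring n :=
  [tuple (tnth x i) (+) (i == j) | i < n].

Lemma flipK x j : flip (flip x j) j = x.
Proof.
apply: eq_from_tnth => i; rewrite !tnth_mktuple -addbA addbb addbF //.
Qed.

Lemma hamming_sym (x y : bstring n) : hamming x y = hamming y x.
Proof. by rewrite !hammingE; apply: eq_card => i; rewrite !inE eq_sym. Qed.

Lemma hamming_flip x j : hamming (flip x j) x = 1.
Proof.
rewrite hammingE; apply: (@eq_card1 _ j) => i; rewrite !inE tnth_mktuple.
by case: (tnth x i); case: (i == j).
Qed.



Lemma hamming_le1 (x y : bstring n) : hamming x y <= 1 ->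
  x = y \/ exists j, x = flip y j.
Proof.
rewrite hammingE.
case: (pickP [pred i | tnth x i != tnth y i]) => [j Hj | H0].
- move: Hj => /= Hj; rewrite (cardD1 j) inE /= Hj add1n ltnS leqn0 => /eqP/card0_eq H.
  right; exists j; apply: eq_from_tnth => i; rewrite tnth_mktuple.
  case: (eqVneq i j) => [-> | ne].
    by move: Hj; rewrite /= addbT; case: (tnth x j); case: (tnth y j).
  have := H i; rewrite !inE ne /= => /negbFE/eqP ->; by rewrite addbF.
- move=> _; left; apply: eq_from_tnth => i.
  by have := H0 i => /= /negbFE/eqP.
Qed.

Definition syn (x : bstring n) : nat :=
  \big[Nat.lxor/0]_(i < n) (if tnth x i then i.+1 else 0).

Lemma syn_flip x j : syn (flip x j) = Nat.lxor (syn x) j.+1.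
Proof.
rewrite /syn.
rewrite (eq_bigr (fun i => Nat.lxor (if tnth x i then i.+1 else 0)
                      (if i == j then j.+1 else 0))); last first.
  move=> i _; rewrite tnth_mktuple.
  case: (eqVneq i j) => [-> | ne]; last by rewrite addbF Nat.lxor_0_r.
  case: (tnth x j) => /=; first by rewrite Nat.lxor_nilpotent.
  by rewrite Nat.lxor_0_l.
rewrite big_split /=; congr Nat.lxor.
rewrite (bigD1 j) //= eqxx big1 ?Nat.lxor_0_r // => i /negbTE -> //.
Qed.

End S.
Lemma pow_expn a b : Nat.pow a b = a ^ b.
Proof. by elim: b => // b IH; rewrite expnS /= IH. Qed.

Lemma lxor_lt p a b : a < 2 ^ p -> b < 2 ^ p -> Nat.lxor a b < 2 ^ p.
Proof.
have P0 : Nat.pow 2 p <> 0 by rewrite pow_expn; have := expn_gt0 2 p; lia.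
rewrite -!pow_expn => /ltP Ha /ltP Hb; apply/ltP.
apply/(Nat.div_small_iff _ _ P0); rewrite -Nat.shiftr_div_pow2 Nat.shiftr_lxor.
rewrite !Nat.shiftr_div_pow2.
by rewrite (proj2 (Nat.div_small_iff _ _ P0) Ha) (proj2 (Nat.div_small_iff _ _ P0) Hb).
Qed.

Definition fb q m := xorb (Nat.testbit m q.+1) (Nat.testbit m q).

Lemma fb_lxor q a b : fb q (Nat.lxor a b) = fb q a (+) fb q b.
Proof.
rewrite /fb !Nat.lxor_spec.
by case: (Nat.testbit a q.+1); case: (Nat.testbit a q); case: (Nat.testbit b q.+1); case: (Nat.testbit b q).
Qed.

Lemma fb0 q : fb q 0 = false.
Proof. by rewrite /fb !Nat.bits_0. Qed.

Lemma bit_of q m l h (a0 : bool) : l < 2 ^ q -> m = l + (a0 + 2 * h) * 2 ^ q ->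
  Nat.testbit m q = a0.
Proof.
move=> Hl Hm; apply: (Nat.testbit_unique _ _ _ l h); rewrite pow_expn.
  by apply/ltP.
by rewrite Hm.
Qed.

Lemma fchar q m : m < 2 ^ q.+2 -> fb q m = (2 ^ q <= m < 3 * 2 ^ q).
Proof.
set L := 2 ^ q.
have L0 : 0 < L by rewrite expn_gt0.
have E1 : 2 ^ q.+1 = 2 * L by rewrite expnS.
have E2 : 2 ^ q.+2 = 4 * L by rewrite !expnS mulnA.
rewrite E2 => Hm.
have Hr : m %% L < L by rewrite ltn_mod.
have Hd := divn_eq m L.
set k := m %/ L in Hd.
set r := m %% L in Hr Hd.
have Hk : k < 4 by rewrite ltn_divLR //; lia.
rewrite /fb.
case: k Hk Hd => [|[|[|[|k]]]] // _ Hd.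
- rewrite (@bit_of _ _ r 0 false); [|rewrite E1; lia|rewrite E1; lia].
  rewrite (@bit_of _ _ r 0 false); [|lia|lia].
  simpl; lia.
- rewrite (@bit_of _ _ (r + L) 0 false); [|rewrite E1; lia|rewrite E1; lia].
  rewrite (@bit_of _ _ r 0 true); [|lia|lia].
  simpl; lia.
- rewrite (@bit_of _ _ r 0 true); [|rewrite E1; lia|rewrite E1; lia].
  rewrite (@bit_of _ _ r 1 false); [|lia|lia].
  simpl; lia.
- rewrite (@bit_of _ _ (r + L) 0 true); [|rewrite E1; lia|rewrite E1; lia].
  rewrite (@bit_of _ _ r 1 true); [|lia|lia].
  simpl; lia.
Qed.

Lemma lxor_cancel a b c : Nat.lxor a b = c -> b = Nat.lxor a c.
Proof. by move<-; rewrite -Nat.lxor_assoc Nat.lxor_nilpotent Nat.lxor_0_l. Qed.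

Lemma syn_lt q (x : bstring (2 ^ q.+2 - 1)) : syn x < 2 ^ q.+2.
Proof.
rewrite /syn; apply: (big_ind (fun m => m < 2 ^ q.+2)).
- by rewrite expn_gt0.
- by move=> a b; apply: lxor_lt.
- move=> i _; case: (tnth x i) => //; last by rewrite expn_gt0.
  have := ltn_ord i; have := expn_gt0 2 q.+2; lia.
Qed.

Lemma ord_lt q (i : 'I_(2 ^ q.+2 - 1)) : i.+1 < 2 ^ q.+2.
Proof. have := ltn_ord i; have := expn_gt0 2 q.+2; lia. Qed.

Lemma key q s (hs : 3 * 2 ^ q <= s) (c : bstring (2 ^ q.+2 - 1)) :
  syn c = 2 ^ q -> gamma_vert s c.
Proof.
move=> Hsyn.
set N := 2 ^ q.+2 - 1.
set L := 2 ^ q.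
have L0 : 0 < L by rewrite expn_gt0.
have E2 : 2 ^ q.+2 = 4 * L by rewrite !expnS mulnA.
have EN : N = 4 * L - 1 by rewrite /N E2.
rewrite -/L in hs Hsyn.
apply/negP => /infixP [s1 [s2 Hc]].
have Hsz : size s1 + s + size s2 = N.
  have : size (val c) = N := size_tuple c.
  by rewrite Hc !size_cat size_nseq addnA.
have Hone : forall i : 'I_N, L <= i.+1 < 3 * L -> tnth c i.
  move=> i /andP [Hi1 Hi2]; rewrite (tnth_nth false) Hc nth_cat.
  have Hin : i < N := ltn_ord i.
  have -> : (i < size s1) = false by apply/negbTE; rewrite -leqNgt; lia.
  rewrite nth_cat size_nseq.
  have -> : (i - size s1 < s) = true by lia.
  by rewrite nth_nseq; have -> : (i - size s1 < s) = true by lia.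
have H1 : fb q (syn c) = true.
  by rewrite Hsyn fchar ?(ltn_exp2l) //= leqnn /= ltn_Pmull.
have H2 : fb q (syn c) = false.
  rewrite /syn (big_morph (fb q) (fb_lxor q) (fb0 q)).
  rewrite (eq_bigr (fun i : 'I_N => (L <= i.+1 < 3 * L))); last first.
    move=> i _; case Hci: (tnth c i); first by rewrite fchar // ord_lt.
    rewrite fb0; apply/esym/negbTE/negP => Hi; move: (Hone i Hi); by rewrite Hci.
  have -> : \big[addb/false]_(i < N) (L <= i.+1 < 3 * L) =
            odd (\sum_(i < N) (L <= i.+1 < 3 * L)).
    by rewrite (@big_morph _ _ odd false addb 0 addn oddD (erefl _)); apply: eq_bigr => i _; rewrite oddb.
  rewrite -(big_mkord xpredT (fun i => nat_of_bool (L <= i.+1 < 3 * L))).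
  rewrite (@big_cat_nat _ _ _ L.-1 0 N) /=; [|lia|lia].
  rewrite (@big_cat_nat _ _ _ (3 * L).-1 L.-1 N) /=; [|lia|lia].
  rewrite (@eq_big_nat _ _ _ 0 L.-1 _ (fun _ => 0)); last by move=> i Hi; apply/eqP; rewrite eqb0; apply/negP => /andP []; lia.
  rewrite (@eq_big_nat _ _ _ L.-1 (3 * L).-1 _ (fun _ => 1)); last by move=> i Hi; apply/eqP; rewrite eqb1; apply/andP; split; lia.
  rewrite (@eq_big_nat _ _ _ (3 * L).-1 N _ (fun _ => 0)); last by move=> i Hi; apply/eqP; rewrite eqb0; apply/negP => /andP []; lia.
  rewrite !sum_nat_const_nat !muln0 add0n addn0 muln1.
  have -> : (3 * L).-1 - L.-1 = 2 * L by lia.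
  by rewrite oddM.
by rewrite H1 in H2.
Qed.

Lemma near_cases n s (c v : bstring n) :
  (v == c) || gamma_adj s c v -> c = v \/ exists j, c = flip v j.
Proof.
case/orP => [/eqP -> | /and3P [_ _ /eqP H]]; first by left.
by apply: hamming_le1; rewrite H.
Qed.

Theorem corollary3 (p s : nat) (hp : 2 <= p) (hs : 3 * 2 ^ (p - 2) <= s) :
  exists C : {set bstring (2 ^ p - 1)}, perfect_code_gamma s C.
Proof.
case: p hp hs => [|[|q]] // _; rewrite !subSS subn0 => hs.
set L := 2 ^ q.
have LL : L < 2 ^ q.+2 by rewrite ltn_exp2l.
exists [set c : bstring (2 ^ q.+2 - 1) | syn c == L]; split.
  by move=> c; rewrite inE => /eqP; apply: key.
move=> v Hv.
have Hsv := syn_lt v.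
set t := Nat.lxor (syn v) L.
have Ht : t < 2 ^ q.+2 by apply: lxor_lt.
case: (eqVneq t 0) => [t0 | tn0].
- have Hs : syn v = L by apply: Nat.lxor_eq.
  apply: (@eq_card1 _ v) => c; rewrite !inE /gamma_closed_nbhd Hv /=.
  apply/idP/idP.
  + case/andP => /eqP Hc /near_cases [-> //| [j Hj]].
    move: Hc; rewrite Hj syn_flip Hs => /lxor_cancel.
    by rewrite Nat.lxor_nilpotent.
  + by move=> /eqP ->; rewrite Hs !eqxx.
- have Hj : t.-1 < 2 ^ q.+2 - 1 by move: tn0; lia.
  set j : 'I_(2 ^ q.+2 - 1) := Ordinal Hj.
  have Hc0 : syn (flip v j) = L.
    rewrite syn_flip /= prednK; last by lia.
    by rewrite /t -Nat.lxor_assoc Nat.lxor_nilpotent Nat.lxor_0_l.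
  apply: (@eq_card1 _ (flip v j)) => c; rewrite !inE /gamma_closed_nbhd Hv /=.
  apply/idP/idP.
  + case/andP => /eqP Hc /near_cases [Hcv | [j' Hj']].
      by move: tn0; rewrite /t -Hcv Hc Nat.lxor_nilpotent eqxx.
    move: Hc; rewrite Hj' syn_flip => /lxor_cancel Hj'1.
    apply/eqP; congr flip; apply: val_inj => /=.
    by rewrite /t -Hj'1.
  + move=> /eqP ->; rewrite Hc0 eqxx /= /gamma_adj Hv key //=.
    by rewrite /cube_adj hamming_flip orbT.
Qed.
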